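(* Let $n \equiv 1 \pmod 6$ be a positive integer and let $\alpha$ be a primitive element of $\mathbb{F}_{2^n}$ (identified with $\mathbb{F}_2^n$). If there exist $\frac{2^n-2}{42}$ pairwise disjoint complete $3$-dimensional subspaces of $\mathbb{F}_2^n$, then there exists a Steiner structure $\mathbb{S}_2[2,3,n]$.
   Context: For a $3$-dimensional $\mathbb{F}_2$-subspace $X = \{0,\alpha^{i_1},\ldots,\alpha^{i_7}\}$ of $\mathbb{F}_{2^n}$ with $i_1,\ldots,i_7\in\{0,\ldots,2^n-2\}$ distinct, its difference set is $\Delta(X) = \{ i_r - i_s \bmod (2^n-1) : 1 \le r,s\le 7,\ r\ne s\}$. $X$ is complete if $|\Delta(X)| = 42$; two complete subspaces $X,Y$ are disjoint complete (pairwise disjoint complete) if $\Delta(X)\cap\Delta(Y) = \varnothing$. A Steiner structure $\mathbb{S}_q[t,k,n]$ is a set $\mathbb{S}$ of $k$-dimensional subspaces of $\mathbb{F}_q^n$ such that every $t$-dimensional subspace of $\mathbb{F}_q^n$ is contained in exactly one element of $\mathbb{S}$. *)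

(* Defs.v *)
From HB Require Import structures.
From mathcomp Require Import all_boot all_order all_algebra all_field.
Set Implicit Arguments. Unset Strict Implicit. Unset Printing Implicit Defensive.
Import GRing.Theory.
Local Open Scope ring_scope.

(* A k-dimensional F_2-subspace of a finite additive group V (used with V of
   characteristic 2: a finite field of order 2^n, or 'rV['F_2]_n).  Over F_2,
   scalar multiplication by 0 or 1 is automatic, so a subspace is a subset
   containing 0 and closed under addition; its dimension is k iff it has 2^k
   elements. *)
Definition is_subspace2 (V : finZmodType) (k : nat) (X : {set V}) : bool :=
  [&& (0 : V) \in X,
      [forall x in X, forall y in X, x + y \in X]
    & #|X| == (2 ^ k)%N].

Definition diffset (F : finFieldType) (a : F) (X : {set F}) : {set 'I_(#|F|.-1)} :=
  [set d : 'I_(#|F|.-1) | [exists i : 'I_(#|F|.-1), exists j : 'I_(#|F|.-1),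
     [&& i != j, a ^+ i \in X, a ^+ j \in X &
         (d == (i + #|F|.-1 - j) %% #|F|.-1 :> nat)%N]]].

Definition complete (F : finFieldType) (a : F) (X : {set F}) : bool :=
  #|diffset a X| == 42%N.

Definition steiner_structure2 (t k n : nat) (S : {set {set 'rV['F_2]_n}}) : Prop :=
  (forall X, X \in S -> is_subspace2 k X) /\
  (forall T : {set 'rV['F_2]_n}, is_subspace2 t T ->
     #|[set X in S | T \subset X]| = 1%N).

(* Main.v *)
Require Import Defs.
From HB Require Import structures.
From mathcomp Require Import all_boot all_order all_algebra all_field.
From mathcomp Require Import zify.
Local Open Scope ring_scope.

Module Helpers.
Set Implicit Arguments. Unset Strict Implicit. Unset Printing Implicit Defensive.
Import GRing.Theory.

Lemma sub_img_inj (U V : finZmodType) (f : U -> V) k (X : {set U}) :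
  {morph f : x y / x + y} -> injective f -> is_subspace2 k X -> is_subspace2 k (f @: X).
Proof.
move=> fD fI.
have f0 : f 0 = 0.
  have h := fD 0 0; rewrite addr0 in h; by have := congr1 (fun z => z - f 0) h; rewrite subrr addrK.
case/and3P=> h0 /forall_inP hc /eqP hk; apply/and3P; split.
- by rewrite -f0; apply: imset_f.
- apply/forall_inP=> _ /imsetP[x xX ->]; apply/forall_inP=> _ /imsetP[y yX ->].
  by rewrite -fD; apply: imset_f; exact: (forall_inP (hc x xX) y yX).
- by rewrite card_imset ?hk.
Qed.

Section Transfer.
Variables (U V : finZmodType) (f : U -> V) (g : V -> U).
Hypotheses (fD : {morph f : x y / x + y}) (fK : cancel f g) (gK : cancel g f).

Lemma f0 : f 0 = 0.
Proof. have h := fD 0 0; rewrite addr0 in h; by have := congr1 (fun z => z - f 0) h; rewrite subrr addrK. Qed.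

Lemma gD : {morph g : x y / x + y}.
Proof. by move=> x y; apply: (can_inj fK); rewrite fD !gK. Qed.

Lemma sub_img k (X : {set U}) : is_subspace2 k X -> is_subspace2 k (f @: X).
Proof. exact: sub_img_inj fD (can_inj fK). Qed.

Lemma sub_subimg (T : {set V}) (X : {set U}) : (T \subset f @: X) = (g @: T \subset X).
Proof.
apply/idP/idP=> h.
- apply/subsetP=> _ /imsetP[t tT ->]; have /imsetP[x xX ->] := subsetP h t tT.
  by rewrite fK.
- apply/subsetP=> t tT; rewrite -[t]gK; apply: imset_f; apply: (subsetP h).
  exact: imset_f.
Qed.
End Transfer.

Lemma transfer (F : finFieldType) n (f : F -> 'rV['F_2]_n) (SF : {set {set F}}) :
  {morph f : x y / x + y} -> bijective f ->
  (forall X, X \in SF -> is_subspace2 3 X) ->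
  (forall T : {set F}, is_subspace2 2 T -> #|[set X in SF | T \subset X]| = 1%N) ->
  exists S : {set {set 'rV['F_2]_n}}, steiner_structure2 2 3 S.
Proof.
move=> fD [g fK gK] h3 h2.
exists ((fun X : {set F} => f @: X) @: SF); split.
  by move=> _ /imsetP[X XS ->]; apply: (sub_img fD fK); exact: h3.
move=> T hT.
have hinj : injective (fun X : {set F} => f @: X).
  have e : forall X : {set F}, g @: (f @: X) = X.
    by move=> X; rewrite -imset_comp (eq_imset _ fK) imset_id.
  by move=> X Y /(congr1 (fun Z : {set 'rV['F_2]_n} => g @: Z)); rewrite !e.
have -> : [set Y in ((fun X : {set F} => f @: X) @: SF) | T \subset Y] =
          (fun X : {set F} => f @: X) @: [set X in SF | g @: T \subset X].
  apply/setP=> Y; rewrite inE; apply/andP/imsetP.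
  - by case=> /imsetP[X XS ->]; rewrite (sub_subimg fK gK) => h; exists X; rewrite // inE XS.
  - by case=> X; rewrite inE => /andP[XS h] ->; rewrite imset_f // (sub_subimg fK gK).
rewrite card_imset //; apply: h2; apply: (sub_img (gD fD fK gK) gK); exact: hT.
Qed.


Lemma card_bigcup_seq (T I : finType) (D : I -> {set T}) (s : seq I) :
  uniq s -> (forall i j, i != j -> [disjoint D i & D j]) ->
  #|\bigcup_(i <- s) D i| = (\sum_(i <- s) #|D i|)%N.
Proof.
move=> us hd; elim: s us => [|a s IH] /=; first by rewrite !big_nil cards0.
case/andP=> as_ us; rewrite !big_cons -IH // cardsU.
suff -> : D a :&: \bigcup_(i <- s) D i = set0 by rewrite cards0 subn0.
apply/setP=> t; rewrite bigcup_seq !inE; apply/negbTE/andP=> -[ta].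
move/bigcupP=> [j js tj]; have aj : a != j by apply: contraNneq as_ => ->.
by have /disjointFr := hd _ _ aj; move=> /(_ t ta); rewrite tj.
Qed.

Lemma div42 n : (n %% 6 = 1)%N -> (42 * ((2 ^ n - 2) %/ 42) = 2 ^ n - 2)%N.
Proof.
move=> h; rewrite mulnC div.divnK //.
have -> : n = (6 * (n %/ 6)%N).+1 by rewrite {1}(div.divn_eq n 6) h addn1 mulnC.
set q := (n %/ 6)%N.
have e : (2 ^ (6 * q).+1 - 2 = 2 * (64 ^ q - 1))%N.
  by rewrite expnS expnM mulnBr muln1.
rewrite e; have : (63 %| 64 ^ q - 1)%N.
  rewrite -eqn_mod_dvd ?expn_gt0 //; rewrite -modnXm /=.
  by rewrite exp1n.
case/dvdnP=> c ->; apply/dvdnP; exists (3 * c)%N; lia.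
Qed.

Lemma modnz (N i j : nat) : (i < N)%N -> (j < N)%N -> i != j -> ((i + N - j) %% N != 0)%N.
Proof.
move=> hi hj hij; case: (ltngtP i j) => h.
- by rewrite modn_small; lia.
- have -> : (i + N - j = (i - j) + N)%N by lia.
  by rewrite modnDr modn_small; lia.
- by move: hij; rewrite h eqxx.
Qed.

Lemma modfact (N a b r s k : nat) : (s < N)%N -> (a < N)%N ->
  (k + s = a %[mod N])%N -> (k + r = b %[mod N])%N ->
  ((r + N - s) %% N = (b + N - a) %% N)%N.
Proof.
move=> hs ha h1 h2; apply/eqP; rewrite -(eqn_modDr (k + s)).
have -> : (r + N - s + (k + s) = (k + r) + N)%N by clear h1 h2; lia.
have e1 : ((k + r + N) %% N = (b + N) %% N)%N.
  by rewrite -modnDml h2 modnDml.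
have e2 : ((b + N - a + (k + s)) %% N = (b + N) %% N)%N.
  rewrite -modnDmr h1 modnDmr.
  by have -> : (b + N - a + a = b + N)%N by clear h1 h2; lia.
by rewrite e1 e2.
Qed.

Lemma modfact2 (N a b r s : nat) : (s < N)%N -> (a < N)%N ->
  ((r + N - s) %% N = (b + N - a) %% N)%N ->
  ((a + N - s) %% N + s = a %[mod N])%N /\ ((a + N - s) %% N + r = b %[mod N])%N.
Proof.
move=> hs ha h; split.
  rewrite modnDml; have -> : (a + N - s + s = a + N)%N by clear h; lia.
  by rewrite modnDr.
rewrite modnDml.
have -> : (a + N - s + r = a + (r + N - s))%N by clear h; lia.
rewrite -modnDmr h modnDmr.
have -> : (a + (b + N - a) = b + N)%N by clear h; lia.
by rewrite modnDr.
Qed.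

Section Core.
Variables (F : finFieldType) (alpha : F).
Local Notation N := (#|F|.-1).
Hypothesis halpha : N.-primitive_root alpha.
Hypothesis ch2 : (2 \in [pchar F])%N.

Lemma Npos : (0 < N)%N.
Proof. exact: prim_order_gt0 halpha. Qed.

Lemma alpha_neq0 k : alpha ^+ k != 0.
Proof.
apply: expf_neq0; apply/eqP=> a0.
have := prim_expr_order halpha; rewrite a0 expr0n.
by have := Npos; case: N => // m _ /= /eqP; rewrite eq_sym oner_eq0.
Qed.

Lemma expE i j : (alpha ^+ i = alpha ^+ j) <-> (i = j %[mod N])%N.
Proof.
split=> [/eqP|h]; first by rewrite (eq_prim_root_expr halpha) => /eqP.
by apply/eqP; rewrite (eq_prim_root_expr halpha); apply/eqP.
Qed.

Lemma logP x : x != 0 -> exists i : 'I_N, alpha ^+ i = x.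
Proof.
move=> x0.
pose E := [set alpha ^+ (val i) | i : 'I_N].
have cE : #|E| = N.
  rewrite card_imset ?card_ord // => i j /expE.
  by rewrite !modn_small ?ltn_ord // => /val_inj.
have : E \subset [set~ 0].
  by apply/subsetP=> _ /imsetP[i _ ->]; rewrite !inE alpha_neq0.
move=> h; have hc := cardsC1 (0 : F).
have eE : E = [set~ 0] by apply/eqP; rewrite eqEcard h hc cE leqnn.
have : x \in E by rewrite eE !inE.
by case/imsetP=> i _ ->; exists i.
Qed.

Lemma addxx (x : F) : x + x = 0.
Proof. by rewrite -mulr2n -mulr_natr (pcharf0 ch2) mulr0. Qed.

Lemma T_struct (T : {set F}) : is_subspace2 2 T -> exists x y,
  [/\ x != 0, y != 0, x != y &
   forall k (B : {set F}), is_subspace2 k B -> (T \subset B) = (x \in B) && (y \in B)].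
Proof.
case/and3P=> h0 /forall_inP hc /eqP hk.
have c1 : #|T :\ 0| = 3%N.
  by move: (cardsD1 0 T); rewrite h0 hk /= add1n => /(congr1 predn) /= e; rewrite -e.
have [x xT] : exists x, x \in T :\ 0.
  by apply/set0Pn; rewrite -card_gt0 c1.
have c2 : #|T :\ 0 :\ x| = 2%N by move: (cardsD1 x (T :\ 0)); rewrite xT c1 /= add1n => /(congr1 predn) /= e; rewrite -e.
have [y yT] : exists y, y \in T :\ 0 :\ x.
  by apply/set0Pn; rewrite -card_gt0 c2.
have c3 : #|T :\ 0 :\ x :\ y| = 1%N by move: (cardsD1 y (T :\ 0 :\ x)); rewrite yT c2 /= add1n => /(congr1 predn) /= e; rewrite -e.
move: xT yT; rewrite !inE => /andP[x0 xT] /and3P[yx y0 yT].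
have xyT : x + y \in T by exact: (forall_inP (hc x xT) y yT).
have xy0 : x + y != 0.
  by apply/eqP => e; move/eqP: yx; apply; apply: (addrI x); rewrite e addxx.
have xyx : x + y != x by rewrite -{2}[x]addr0 (inj_eq (addrI x)).
have xyy : x + y != y by rewrite -{2}[y]add0r (inj_eq (addIr y)).
have [z hz] : exists z, T :\ 0 :\ x :\ y = [set z] by apply/cards1P; rewrite c3.
have xyz : x + y = z.
  by apply/set1P; rewrite -hz !inE xyy xyx xy0 xyT.
exists x, y; split => //; first by rewrite eq_sym.
move=> k B /and3P[B0 /forall_inP Bc _]; apply/idP/andP.
  by move/subsetP=> s; split; apply: s.
case=> xB yB; apply/subsetP => t tT.
case: (eqVneq t 0) => [->//|t0]; case: (eqVneq t x) => [->//|tx].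
case: (eqVneq t y) => [->//|ty].
have : t \in [set z] by rewrite -hz !inE ty tx t0 tT.
move/set1P=> ->; rewrite -xyz; exact: (forall_inP (Bc x xB) y yB).
Qed.

Lemma exp_inj : injective (fun i : 'I_N => alpha ^+ i).
Proof. by move=> i j /expE; rewrite !modn_small ?ltn_ord // => /val_inj. Qed.

Definition blk (k : nat) (X : {set F}) := [set alpha ^+ k * u | u in X].
Definition dm (p : 'I_N * 'I_N) : 'I_N := Ordinal (ltn_pmod ((p.1 + N - p.2)%N) Npos).
Definition PP (X : {set F}) := [set p : 'I_N * 'I_N |
  [&& p.1 != p.2, alpha ^+ p.1 \in X & alpha ^+ p.2 \in X]].

Lemma diffsetE X : diffset alpha X = dm @: PP X.
Proof.
apply/setP => d; apply/idP/imsetP.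
- rewrite /diffset inE => /existsP[i /existsP[j /and4P[ij ai aj /eqP hd]]].
  by exists (i, j); [rewrite inE ij ai aj | apply: val_inj; rewrite /= hd].
- case=> -[i j]; rewrite inE /= => /and3P[ij ai aj] ->; rewrite inE.
  by apply/existsP; exists i; apply/existsP; exists j; rewrite ij ai aj /=.
Qed.

Lemma blk_sub k X : is_subspace2 3 X -> is_subspace2 3 (blk k X).
Proof.
apply: sub_img_inj; first by move=> u v; rewrite mulrDr.
exact: mulfI (alpha_neq0 k).
Qed.

Lemma cardL X : is_subspace2 3 X -> #|[set i : 'I_N | alpha ^+ i \in X]| = 7%N.
Proof.
case/and3P=> h0 _ /eqP hk.
have e : (fun i : 'I_N => alpha ^+ i) @: [set i : 'I_N | alpha ^+ i \in X] = X :\ 0.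
  apply/setP=> x; apply/imsetP/idP.
    by case=> i; rewrite inE => hi ->; rewrite !inE alpha_neq0 hi.
  rewrite !inE => /andP[x0 xX]; have [i hi] := logP x0.
  by exists i; rewrite // inE hi.
rewrite -(card_imset _ exp_inj) e.
by move: (cardsD1 0 X); rewrite h0 hk /= add1n => /(congr1 predn) /= e'; rewrite -e'.
Qed.

Lemma cardPP X : is_subspace2 3 X -> #|PP X| = 42%N.
Proof.
move=> hX; set L := [set i : 'I_N | alpha ^+ i \in X].
have e : PP X = setX L L :\: [set (i, i) | i in L].
  apply/setP=> -[i j]; rewrite !inE /=.
  case: (boolP ((i, j) \in [set (i, i) | i in L])).
    by case/imsetP=> l _ [-> ->]; rewrite eqxx.
  move=> hn; case: (eqVneq i j) => [eij|//]; rewrite -eij in hn *.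
  case hi: (alpha ^+ i \in X) => //=.
  by move: hn; rewrite imset_f // inE.
have sub : [set (i, i) | i in L] \subset setX L L.
  by apply/subsetP=> _ /imsetP[i hi ->]; rewrite inE /= hi.
rewrite e cardsD (setIidPr sub) cardsX card_imset; last by move=> a b [].
by rewrite cardL.
Qed.

Lemma compl_inj X : is_subspace2 3 X -> complete alpha X -> {in PP X &, injective dm}.
Proof.
move=> hX hc; apply/imset_injP; rewrite -diffsetE cardPP //; exact: hc.
Qed.

Section Main.
Variables (M : nat) (f : 'I_M -> {set F}).
Hypothesis hM : (42 * M = N - 1)%N.
Hypothesis hf : forall i, is_subspace2 3 (f i) /\ complete alpha (f i).
Hypothesis hdj : forall i j, i != j -> [disjoint diffset alpha (f i) & diffset alpha (f j)].

Lemma diff_nz X (d : 'I_N) : d \in diffset alpha X -> (d != 0 :> nat)%N.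
Proof.
rewrite diffsetE => /imsetP[[i j]]; rewrite inE /= => /andP[ij _] ->.
by rewrite /= modnz.
Qed.

Lemma cover (d : 'I_N) : (d != 0 :> nat)%N -> exists i, d \in diffset alpha (f i).
Proof.
move=> d0; case: (boolP [exists i, d \in diffset alpha (f i)]) => [/existsP//|hn].
exfalso.
pose U := \bigcup_(i <- enum 'I_M) diffset alpha (f i).
have cU : #|U| = (N - 1)%N.
  rewrite card_bigcup_seq ?enum_uniq //.
  under eq_bigr => i _ do rewrite (eqP (hf i).2).
  by rewrite big_const_seq count_predT size_enum_ord iter_addn_0 -hM mulnC.
have e0l : (0 < N)%N := Npos.
pose e0 : 'I_N := Ordinal e0l.
have sU : U \subset [set~ d] :\ e0.
  apply/subsetP=> t; rewrite /U bigcup_seq => /bigcupP[i _ ti].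
  rewrite !inE; apply/andP; split.
    by apply/eqP=> te; have := diff_nz ti; rewrite te.
  by apply: contraNneq hn => te; apply/existsP; exists i; rewrite -te.
have := subset_leq_card sU.
have de0 : e0 \in [set~ d] by rewrite !inE; apply/eqP=> /(congr1 val) /= h; rewrite -h eqxx in d0.
move: (cardsD1 e0 [set~ d]); rewrite de0 cardsC1 card_ord cU /=.
have := ltn_ord d; set c := #|[set~ d] :\ e0|; move: c (nat_of_ord d) d0 => c dn + ; move: (#|F|) => K; rewrite -!subn1; lia.
Qed.

Let SF := [set blk p.1 (f p.2) | p : 'I_N * 'I_M].

Lemma SF_sub X : X \in SF -> is_subspace2 3 X.
Proof. by case/imsetP=> p _ ->; apply: blk_sub; exact: (hf _).1. Qed.

Lemma expD_mod k s a : (alpha ^+ k * alpha ^+ s = alpha ^+ a) -> (k + s = a %[mod N])%N.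
Proof. by rewrite -exprD => /expE. Qed.

Lemma charblk (a b : 'I_N) k i : alpha ^+ a \in blk k (f i) -> alpha ^+ b \in blk k (f i) ->
  a != b -> exists r s : 'I_N, [/\ (r, s) \in PP (f i), dm (r, s) = dm (b, a) &
     alpha ^+ k * alpha ^+ s = alpha ^+ a].
Proof.
move=> /imsetP[u uX hu] /imsetP[v vX hv] ab.
have u0 : u != 0 by apply/eqP => e; move: (alpha_neq0 a); rewrite hu e mulr0 eqxx.
have v0 : v != 0 by apply/eqP => e; move: (alpha_neq0 b); rewrite hv e mulr0 eqxx.
have [s hs] := logP u0; have [r hr] := logP v0.
exists r, s; split.
- rewrite inE /= hs hr uX vX !andbT; apply: contra ab => /eqP rs.
  by apply/eqP; apply: exp_inj; rewrite /= hu hv -hs -hr rs.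
- apply: val_inj => /=; apply: (@modfact _ _ _ _ _ k) => //.
  + by apply: expD_mod; rewrite hs hu.
  + by apply: expD_mod; rewrite hr hv.
- by rewrite hs hu.
Qed.

Lemma count1 T : is_subspace2 2 T -> #|[set X in SF | T \subset X]| = 1%N.
Proof.
case/T_struct => x [y [x0 y0 xy hT]].
have [a ha] := logP x0; have [b hb] := logP y0.
have ab : a != b by apply: contra xy => /eqP e; rewrite -ha -hb e.
have dnz : (dm (b, a) != 0 :> nat)%N by rewrite /= modnz // eq_sym.
have [i hi] := cover dnz.
move: hi; rewrite diffsetE => /imsetP[[r s] hrs hd].
have hd' : ((r + N - s) %% N = (b + N - a) %% N)%N by move/(congr1 val): hd => /= ->.
have [h1 h2] := modfact2 (ltn_ord s) (ltn_ord a) hd'.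
pose k : 'I_N := Ordinal (ltn_pmod ((a + N - s)%N) Npos).
pose X0 := blk k (f i).
have X0S : X0 \in SF by apply/imsetP; exists (k, i).
have hks : alpha ^+ k * alpha ^+ s = alpha ^+ a by rewrite -exprD; apply/expE.
have hkr : alpha ^+ k * alpha ^+ r = alpha ^+ b by rewrite -exprD; apply/expE.
move: hrs; rewrite inE /= => /and3P[rs rX sX].
have xX0 : x \in X0 by rewrite -ha -hks; apply: imset_f.
have yX0 : y \in X0 by rewrite -hb -hkr; apply: imset_f.
have uniq : forall X, X \in SF -> x \in X -> y \in X -> X = X0.
  move=> X /imsetP[[k' i'] _ ->] /=; rewrite -ha -hb => hx hy.
  have [r1 [s1 [hp1 hd1 hk1]]] := charblk hx hy ab.
  have ii : i' = i.
    apply/eqP; apply/negPn/negP => nii; have := hdj nii.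
    have in1 : dm (b, a) \in diffset alpha (f i') by rewrite diffsetE -hd1 imset_f.
    have in2 : dm (b, a) \in diffset alpha (f i).
      by rewrite diffsetE hd imset_f // inE /= rs rX sX.
    by move/disjointFr => /(_ _ in1); rewrite in2.
  subst i'.
  have := compl_inj (hf i).1 (hf i).2 hp1; rewrite hd1 hd => /(_ (r, s)).
  move=> h; have hp : (r, s) \in PP (f i) by rewrite inE /= rs rX sX.
  case: (h hp erefl) => er es.
  subst r1 s1.
  have e : alpha ^+ k' = alpha ^+ k.
    by apply: (mulIf (alpha_neq0 s)); rewrite hk1 hks.
  by rewrite /X0 /blk; apply: eq_imset => u; rewrite e.
have -> : [set X in SF | T \subset X] = [set X0].
  apply/setP => X; rewrite !inE; apply/andP/eqP.
    by case=> XS; rewrite (hT 3%N X (SF_sub XS)) => /andP[]; exact: uniq.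
  by move=> ->; rewrite X0S (hT 3%N X0 (SF_sub X0S)) xX0 yX0.
by rewrite cards1.
Qed.

End Main.

End Core.
Lemma iso_exists (F : finFieldType) n : #|F| = (2 ^ n)%N ->
  exists f : F -> 'rV['F_2]_n, {morph f : x y / x + y} /\ bijective f.
Proof.
move=> hF.
have ch : (2 \in [pchar F])%N by apply: (card_finPcharP hF).
have := pprimeChar_vectAxiom ch.
have -> : logn 2 #|pPrimeCharType ch| = n by rewrite hF pfactorK.
case=> f lf bf; exists f; split => //.
move=> x y; have := lf 1 x y; by rewrite !scale1r.
Qed.
End Helpers.
Import Helpers.

Theorem theorem1 (n : nat) (F : finFieldType) (alpha : F)
  (hn : (0 < n)%N) (hmod : (n %% 6 = 1)%N)
  (hF : #|F| = (2 ^ n)%N)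
  (halpha : (#|F|.-1).-primitive_root alpha)
  (hfam : exists f : 'I_(((2 ^ n) - 2) %/ 42) -> {set F},
     (forall i, is_subspace2 3 (f i) /\ complete alpha (f i)) /\
     (forall i j, i != j -> [disjoint diffset alpha (f i) & diffset alpha (f j)])) :
  exists S : {set {set 'rV['F_2]_n}}, steiner_structure2 2 3 S.
Proof.
case: hfam => f [hf hdj].
have ch2 : (2 \in [pchar F])%N by apply: (card_finPcharP hF).
have hM : (42 * ((2 ^ n - 2) %/ 42) = #|F|.-1 - 1)%N.
  rewrite div42 // hF -subn1; move: (2 ^ n)%N => K; lia.
have [g [gD gbij]] := iso_exists hF.
apply: (transfer gD gbij _ (count1 halpha ch2 hM hf hdj)).
by move=> X; apply: SF_sub.
Qed.
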